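(* Let $\tau\in\mathbb{R}\setminus\mathbb{Q}$ and $\bar\varphi\in\mathbb{T}$, and put $\bar\varphi'=R_{1/2}\bar\varphi$. Then there exists a Denjoy map $f:\mathbb{T}\to\mathbb{T}$ such that: (a) $f$ is $\mathbb{Z}_2$-equivariant, i.e. $f\circ R_{1/2}=R_{1/2}\circ f$; (b) the rotation number of $f$ is $\rho(f)=\bar\tau$; (c) the minimal Cantor set $C$ of $f$ satisfies $R_{1/2}C=C$, and there is a Cantor function $\mathcal{P}$ associated to $C$ with $\mathcal{P}\circ R_{1/2}=R_{1/2}\circ\mathcal{P}$, $\mathcal{P}(A)=\{\overline{\varphi+n\tau}:n\in\mathbb{Z}\}\cup\{\overline{\varphi'+n\tau}:n\in\mathbb{Z}\}$ ($A$ the accessible set of $C$), and $\mathcal{P}\circ f=R_{\bar\tau}\circ\mathcal{P}$.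
   Context: $\mathbb{T}=\mathbb{R}/\mathbb{Z}$ with points $\bar\theta=\theta+\mathbb{Z}$; $R_{\bar\eta}(\bar\theta)=\overline{\theta+\eta}$. A Denjoy map is an orientation preserving homeomorphism of $\mathbb{T}$ with irrational rotation number which is not topologically conjugate to any rotation; such a map has a unique minimal set, which is a Cantor set. A Cantor set is a compact, totally disconnected, perfect subset $C\subset\mathbb{T}$, written $C=\mathbb{T}\setminus\bigcup_{k\ge0}\dot\alpha_k$ with $\{\alpha_k\}$ pairwise disjoint closed arcs; its accessible set $A$ is the set of endpoints of all $\alpha_k$. $\bar\theta_1\sim\bar\theta_2$ means equal or in the same $\alpha_k$. A Cantor function associated to $C$ is a continuous, cyclic-order-preserving map $\mathcal{P}:\mathbb{T}\to\mathbb{T}$ with $\mathcal{P}(\bar\theta_1)=\mathcal{P}(\bar\theta_2)$ iff $\bar\theta_1\sim\bar\theta_2$. A map $g:\mathbb{T}\to\mathbb{T}$ is $\mathbb{Z}_m$-equivariant if $g(\bar\theta+\tfrac1m)=g(\bar\theta)+\tfrac1m$ for all $\bar\theta$. *)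

(* Defs.v *)
(* the circle T = R/Z is handled through real representatives
   and lifts of circle maps to R. *)
From Stdlib Require Export Reals.
Open Scope R_scope.

Definition eqT (x y : R) : Prop := exists k : Z, y - x = IZR k.

Definition irrational (x : R) : Prop :=
  ~ exists p q : Z, q <> 0%Z /\ x = IZR p / IZR q.

(* F : R -> R is a lift of an orientation preserving homeomorphism of T *)
Definition circle_homeo_plus (F : R -> R) : Prop :=
  continuity F /\ (forall x y, x < y -> F x < F y) /\
  (forall x, F (x + 1) = F x + 1).

(* H : R -> R is a lift of a homeomorphism of T (orientation preserving or
   reversing) *)
Definition circle_homeo (H : R -> R) : Prop :=
  continuity H /\
  (((forall x y, x < y -> H x < H y) /\ (forall x, H (x + 1) = H x + 1)) \/
   ((forall x y, x < y -> H y < H x) /\ (forall x, H (x + 1) = H x - 1))).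

(* rotation number (as a real number; the rotation number in T is its class) *)
Definition rot_num (F : R -> R) (r : R) : Prop :=
  forall x, Un_cv (fun n => (Nat.iter (S n) F x - x) / INR (S n)) r.

Definition conj_to_rotation (F : R -> R) : Prop :=
  exists (H : R -> R) (alpha : R), circle_homeo H /\
    forall x, eqT (H (F x)) (H x + alpha).

Definition denjoy_map (F : R -> R) : Prop :=
  circle_homeo_plus F /\
  (exists r, rot_num F r /\ irrational r) /\
  ~ conj_to_rotation F.

(* subsets of T are represented by 1-periodic subsets of R *)
Definition circ_set (C : R -> Prop) : Prop := forall x, C x <-> C (x + 1).

Definition closed_set (C : R -> Prop) : Prop :=
  forall x, (forall eps, 0 < eps -> exists y, C y /\ Rabs (y - x) < eps) -> C x.

Definition invariant (F : R -> R) (C : R -> Prop) : Prop :=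
  forall x, C x <-> C (F x).

Definition minimal_set (F : R -> R) (C : R -> Prop) : Prop :=
  circ_set C /\ closed_set C /\ (exists x, C x) /\ invariant F C /\
  forall D : R -> Prop,
    circ_set D -> closed_set D -> (exists x, D x) -> invariant F D ->
    (forall x, D x -> C x) -> forall x, C x -> D x.

(* Cantor set in T: compact (closed), totally disconnected (contains no
   nondegenerate arc), perfect, nonempty *)
Definition cantor_set (C : R -> Prop) : Prop :=
  circ_set C /\ closed_set C /\ (exists x, C x) /\
  (forall a b, a < b -> exists y, a <= y <= b /\ ~ C y) /\
  (forall x, C x -> forall eps, 0 < eps ->
     exists y, C y /\ y <> x /\ Rabs (y - x) < eps).

(* [a,b] is (a lift of) one of the closed complementary arcs alpha_k *)
Definition gap (C : R -> Prop) (a b : R) : Prop :=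
  a < b /\ C a /\ C b /\ forall y, a < y < b -> ~ C y.

Definition accessible (C : R -> Prop) (x : R) : Prop :=
  exists y, gap C x y \/ gap C y x.

Definition simC (C : R -> Prop) (t1 t2 : R) : Prop :=
  eqT t1 t2 \/
  exists (k1 k2 : Z) (a b : R), gap C a b /\
    a <= t1 + IZR k1 <= b /\ a <= t2 + IZR k2 <= b.

(* P : R -> R lifts a Cantor function associated to C: a continuous
   cyclic-order-preserving (degree one, nondecreasing lift) map T -> T
   with P t1 = P t2 in T iff t1 ~ t2 *)
Definition cantor_function (C : R -> Prop) (P : R -> R) : Prop :=
  continuity P /\ (forall x y, x <= y -> P x <= P y) /\
  (forall x, P (x + 1) = P x + 1) /\
  forall t1 t2, eqT (P t1) (P t2) <-> simC C t1 t2.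

(* Main.v *)
From Stdlib Require Import Reals Lra Lia ZArith ClassicalEpsilon Classical FunctionalExtensionality PropExtensionality.
From Coquelicot Require Import Coquelicot.
Require Import Defs.
Open Scope R_scope.

Definition w (k : nat) : R := (/2)^k.

Lemma w_pos k : 0 < w k. Proof. unfold w; apply pow_lt; lra. Qed.

Lemma is_series_w : is_series w 2.
Proof. unfold w. assert (Hq : Rabs (/2) < 1) by (rewrite Rabs_pos_eq; lra).
  pose proof (is_series_geom _ Hq) as H. replace (/ (1 - /2)) with 2 in H by field. exact H. Qed.
Lemma ex_series_w : ex_series w. Proof. eexists; apply is_series_w. Qed.
Lemma Series_w : Series w = 2. Proof. apply is_series_unique, is_series_w. Qed.

Lemma Series_zero : Series (fun _ => 0) = 0.
Proof. rewrite (Series_ext _ (fun n => 0 * w n)). rewrite Series_scal_l. ring. intros; ring. Qed.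

Lemma Series_nonneg a : (forall k, 0 <= a k) -> ex_series a -> 0 <= Series a.
Proof. intros H He. rewrite <- Series_zero. apply Series_le; auto. intros; split; [lra| auto]. Qed.

Lemma ex_series_cw c : ex_series (fun k => c * w k).
Proof. apply (ex_series_scal_l c w), ex_series_w. Qed.

Lemma ex_series_dom a c : (forall k, Rabs (a k) <= c * w k) -> ex_series a.
Proof. intros H. apply (ex_series_le a (fun k => c * w k)). exact H. apply ex_series_cw. Qed.

Lemma Series_term_le a j : (forall k, 0 <= a k) -> ex_series a -> a j <= Series a.
Proof.
  intros H He. rewrite (Series_incr_n a (S j)); [| lia | exact He]. simpl.
  assert (0 <= Series (fun k => a (S (j + k)))).
  { apply Series_nonneg. intros; auto. apply (ex_series_incr_n a (S j)) in He. exact He. }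
  destruct j; simpl in *. lra.
  assert (0 <= sum_f_R0 a j) by (apply cond_pos_sum; auto). lra.
Qed.

Definition fl (x : R) : R := IZR (Zfloor x).
Lemma fl_bound x : fl x <= x < fl x + 1. Proof. apply Zfloor_bound. Qed.
Lemma fl_shift x : fl (x + 1) = fl x + 1.
Proof. unfold fl. replace 1 with (IZR 1) by reflexivity. rewrite Zfloor_addz. rewrite plus_IZR. reflexivity. Qed.
Lemma fl_le x y : x <= y -> fl x <= fl y.
Proof. intros; unfold fl; apply IZR_le, Zfloor_le; auto. Qed.
Lemma fl_eq (z : Z) x : IZR z <= x < IZR z + 1 -> fl x = IZR z.
Proof. intros; unfold fl; f_equal; apply Zfloor_eq; auto. Qed.
Lemma fl_diff_le1 x y : x <= y < x + 1 -> fl y - fl x <= 1.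
Proof.
  intros H. destruct (fl_bound x), (fl_bound y). unfold fl in *.
  assert (IZR (Zfloor y) < IZR (Zfloor x) + 2) by lra.
  rewrite <- minus_IZR. apply IZR_le.
  replace 2 with (IZR 2) in H4 by reflexivity. rewrite <- plus_IZR in H4. apply lt_IZR in H4. lia.
Qed.

Section Asum.
Variable s : nat -> R.
Hypothesis s_bd : forall k, 0 <= s k < 1.

Definition trm (u : R) (k : nat) : R := w k * fl (u - s k).

Lemma fl_abs y : Rabs (fl y) <= Rabs y + 1.
Proof. destruct (fl_bound y). unfold Rabs; repeat destruct Rcase_abs; lra. Qed.

Lemma trm_bound u k : Rabs (trm u k) <= (Rabs u + 2) * w k.
Proof.
  unfold trm. rewrite Rabs_mult, (Rabs_pos_eq (w k)) by (left; apply w_pos).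
  rewrite Rmult_comm. apply Rmult_le_compat_r. left; apply w_pos.
  eapply Rle_trans. apply fl_abs. destruct (s_bd k).
  unfold Rabs; repeat destruct Rcase_abs; lra.
Qed.

Lemma ex_trm u : ex_series (trm u).
Proof. apply (ex_series_dom _ (Rabs u + 2)), trm_bound. Qed.

Definition A (u : R) : R := Series (trm u).

Lemma A_shift u : A (u + 1) = A u + 2.
Proof.
  unfold A. rewrite (Series_ext _ (fun k => trm u k + w k)).
  rewrite Series_plus. rewrite Series_w. reflexivity. apply ex_trm. apply ex_series_w.
  intros k. unfold trm. replace (u + 1 - s k) with (u - s k + 1) by ring. rewrite fl_shift. ring.
Qed.

Definition dtrm u u' k := w k * (fl (u' - s k) - fl (u - s k)).

Lemma A_diff u u' : A u' - A u = Series (dtrm u u').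
Proof.
  unfold A, dtrm. rewrite <- Series_minus by apply ex_trm. apply Series_ext. intros; unfold trm; ring.
Qed.


Lemma ex_dtrm u u' : ex_series (dtrm u u').
Proof.
  apply (ex_series_dom _ ((Rabs u' + 2) + (Rabs u + 2))). intros k.
  unfold dtrm. replace (w k * (fl (u' - s k) - fl (u - s k))) with (trm u' k - trm u k) by (unfold trm; ring).
  eapply Rle_trans. apply Rabs_triang. rewrite Rabs_Ropp.
  pose proof (trm_bound u k); pose proof (trm_bound u' k). lra.
Qed.

Lemma dtrm_nonneg u u' k : u <= u' -> 0 <= dtrm u u' k.
Proof.
  intros H. unfold dtrm. apply Rmult_le_pos. left; apply w_pos.
  assert (fl (u - s k) <= fl (u' - s k)) by (apply fl_le; lra). lra.
Qed.

Lemma A_mono u u' : u <= u' -> A u <= A u'.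
Proof.
  intros H. assert (0 <= A u' - A u); [|lra]. rewrite A_diff.
  apply Series_nonneg. intros; apply dtrm_nonneg; auto. apply ex_dtrm.
Qed.

Lemma A_jump u v u' j (m : Z) : u < v <= u' -> v - s j = IZR m -> w j <= A u' - A u.
Proof.
  intros H Hm. rewrite A_diff. eapply Rle_trans; [|apply Series_term_le].
  2: intros; apply dtrm_nonneg; lra. 2: apply ex_dtrm.
  unfold dtrm. rewrite <- (Rmult_1_r (w j)) at 1. apply Rmult_le_compat_l. left; apply w_pos.
  assert (fl (u' - s j) >= IZR m).
  { unfold fl. apply Rle_ge, IZR_le, Zfloor_lub. lra. }
  assert (fl (u - s j) <= IZR m - 1).
  { destruct (fl_bound (u - s j)) as [Hb1 Hb2]. unfold fl in *.
    assert (Hlt : IZR (Zfloor (u - s j)) < IZR m) by lra. apply lt_IZR in Hlt.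
    rewrite <- (minus_IZR m 1). apply IZR_le. lia. }
  lra.
Qed.

Lemma fl_locconst_one x : (forall m : Z, x <> IZR m) ->
  exists eta, 0 < eta /\ forall y, Rabs (y - x) < eta -> fl y = fl x.
Proof.
  intros H. destruct (fl_bound x). assert (fl x <> x) by (unfold fl; auto).
  exists (Rmin (x - fl x) (fl x + 1 - x)). split. apply Rmin_glb_lt; lra.
  intros y Hy. unfold fl at 2. apply fl_eq. fold (fl x).
  assert (Rmin (x - fl x) (fl x + 1 - x) <= x - fl x) by apply Rmin_l.
  assert (Rmin (x - fl x) (fl x + 1 - x) <= fl x + 1 - x) by apply Rmin_r.
  revert Hy; unfold Rabs; destruct Rcase_abs; intros; lra.
Qed.

Lemma fl_locconst v N : (forall k (m : Z), v - s k <> IZR m) ->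
  exists eta, 0 < eta /\ forall k y, (k < N)%nat -> Rabs (y - v) < eta -> fl (y - s k) = fl (v - s k).
Proof.
  intros H. induction N.
  - exists 1. split. lra. intros; lia.
  - destruct IHN as [e1 [He1 H1]].
    destruct (fl_locconst_one (v - s N)) as [e2 [He2 H2]]. intros m; apply H.
    exists (Rmin e1 e2). split. apply Rmin_glb_lt; auto.
    intros k y Hk Hy. assert (Rmin e1 e2 <= e1) by apply Rmin_l. assert (Rmin e1 e2 <= e2) by apply Rmin_r.
    destruct (Nat.eq_dec k N). subst. apply H2. replace (y - s N - (v - s N)) with (y - v) by ring. lra.
    apply H1. lia. lra.
Qed.

Lemma A_cont v : (forall k (m : Z), v - s k <> IZR m) ->
  forall d, 0 < d -> exists h, 0 < h /\ h < 1 /\ A (v + h) - A (v - h) < d.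
Proof.
  intros H d Hd.
  destruct (pow_lt_1_zero (/2)) with (y := d / 4) as [N0 HN0]. rewrite Rabs_pos_eq; lra. lra.
  set (N := S N0).
  assert (HN : (/2)^N < d/4). { specialize (HN0 N ltac:(unfold N; lia)). rewrite Rabs_pos_eq in HN0; auto. left; apply pow_lt; lra. }
  destruct (fl_locconst v N H) as [eta [Heta Hloc]].
  set (h := Rmin eta (1/4) / 2).
  assert (0 < Rmin eta (1/4)) by (apply Rmin_glb_lt; lra).
  assert (Hh1 : 0 < h) by (unfold h; lra).
  assert (Hh2 : h < eta) by (unfold h; pose proof (Rmin_l eta (1/4)); lra).
  assert (Hh3 : h <= 1/8) by (unfold h; pose proof (Rmin_r eta (1/4)); lra).
  exists h. split; [auto|split; [lra|]].
  rewrite A_diff. rewrite (Series_incr_n _ N) by (unfold N; lia || apply ex_dtrm).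
  rewrite sum_eq_R0.
  2:{ intros n Hn. unfold dtrm. rewrite (Hloc n (v+h)), (Hloc n (v-h)). ring.
      unfold N in *; lia.
      replace (v - h - v) with (-h) by ring. rewrite Rabs_Ropp, Rabs_pos_eq; lra.
      unfold N in *; lia. replace (v + h - v) with h by ring. rewrite Rabs_pos_eq; lra. }
  assert (Series (fun k => dtrm (v - h) (v + h) (N + k)) <= Series (fun k => (/2)^N * w k)).
  { apply Series_le. intros k. split. apply dtrm_nonneg; lra.
    unfold dtrm. unfold w at 1. rewrite pow_add. rewrite Rmult_assoc. fold (w k).
    apply Rmult_le_compat_l. left; apply pow_lt; lra.
    rewrite <- (Rmult_1_r (w k)) at 2. apply Rmult_le_compat_l. left; apply w_pos.
    apply fl_diff_le1. lra. apply ex_series_cw. }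
  rewrite (Series_scal_l ((/2)^N) w), Series_w in H1. simpl Init.Nat.pred. lra.
Qed.

End Asum.

Lemma php K : forall (f : nat -> nat), (forall i, (i <= K)%nat -> (f i < K)%nat) ->
  exists i j, (i < j <= K)%nat /\ f i = f j.
Proof.
  induction K; intros f Hf.
  - specialize (Hf 0%nat ltac:(lia)). lia.
  - set (c := f (S K)).
    destruct (classic (exists i, (i <= K)%nat /\ f i = c)) as [[i [Hi Hc]]|Hn].
    + exists i, (S K). split. lia. auto.
    + set (f' := fun i => if Nat.ltb (f i) c then f i else (f i - 1)%nat).
      destruct (IHK f') as [i [j [Hij Heq]]].
      { intros i Hi. assert (f i <> c) by (intro; apply Hn; exists i; auto).
        assert (f i < S K)%nat by (apply Hf; lia). assert (c < S K)%nat by (apply Hf; lia).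
        unfold f'. destruct (Nat.ltb_spec (f i) c); lia. }
      exists i, j. split. lia.
      assert (f i <> c) by (intro; apply Hn; exists i; split; [lia|auto]).
      assert (f j <> c) by (intro; apply Hn; exists j; split; [lia|auto]).
      unfold f' in Heq. destruct (Nat.ltb_spec (f i) c), (Nat.ltb_spec (f j) c); lia.
Qed.

Lemma nat_above y : 0 <= y -> exists N : nat, INR N - 1 <= y < INR N.
Proof.
  intros Hy. exists (Z.to_nat (Zfloor y + 1)). rewrite INR_IZR_INZ, Z2Nat.id.
  rewrite plus_IZR. pose proof (Zfloor_bound y). simpl. lra.
  pose proof (Zfloor_bound y). assert (-1 < IZR (Zfloor y)) by lra.
  apply lt_IZR in H0. lia.
Qed.

Lemma close_pair (t : nat -> R) (K : nat) : (0 < K)%nat -> (forall i, 0 <= t i < 1) ->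
  exists i j, (i < j <= K)%nat /\ Rabs (t i - t j) < / INR K.
Proof.
  intros HK Ht. assert (HKr : 0 < INR K) by (apply lt_0_INR; auto).
  set (f := fun i => Z.to_nat (Zfloor (INR K * t i))).
  assert (Hb : forall i, 0 <= IZR (Zfloor (INR K * t i)) /\ IZR (Zfloor (INR K * t i)) <= INR K * t i /\ INR K * t i < IZR (Zfloor (INR K * t i)) + 1).
  { intros i. pose proof (Zfloor_bound (INR K * t i)). destruct (Ht i).
    assert (0 <= INR K * t i) by nra. split; [|lra].
    assert (-1 < IZR (Zfloor (INR K * t i))) by lra. apply lt_IZR in H3. apply IZR_le. lia. }
  destruct (php K f) as [i [j [Hij Hf]]].
  { intros i _. unfold f. destruct (Hb i) as [H1 [H2 H3]]. destruct (Ht i).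
    assert (INR K * t i < INR K) by nra.
    assert (Hlt : IZR (Zfloor (INR K * t i)) < IZR (Z.of_nat K)) by (rewrite <- INR_IZR_INZ; lra).
    apply lt_IZR in Hlt. apply le_IZR in H1. lia. }
  exists i, j. split. auto.
  unfold f in Hf. destruct (Hb i) as [Hi1 [Hi2 Hi3]]. destruct (Hb j) as [Hj1 [Hj2 Hj3]].
  apply le_IZR in Hi1. apply le_IZR in Hj1.
  assert (Zfloor (INR K * t i) = Zfloor (INR K * t j)) by lia. rewrite H in *.
  assert (Rabs (INR K * t i - INR K * t j) < 1) by (unfold Rabs; destruct Rcase_abs; lra).
  replace (INR K * t i - INR K * t j) with (INR K * (t i - t j)) in H0 by ring.
  rewrite Rabs_mult, (Rabs_pos_eq (INR K)) in H0 by lra.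
  apply (Rmult_lt_reg_l (INR K)). auto. rewrite Rinv_r by lra. auto.
Qed.

Lemma approx (alpha d : R) : 0 < d -> exists (q : nat) (m : Z), (0 < q)%nat /\ Rabs (INR q * alpha - IZR m) < d.
Proof.
  intros Hd. destruct (nat_above (/ d)) as [K [HK1 HK2]]. left; apply Rinv_0_lt_compat; auto.
  assert (HK : (0 < K)%nat). { destruct K. simpl in HK2. pose proof (Rinv_0_lt_compat d Hd). lra. lia. }
  set (t := fun i => INR i * alpha - IZR (Zfloor (INR i * alpha))).
  destruct (close_pair t K HK) as [i [j [Hij Hc]]].
  { intros i. unfold t. pose proof (Zfloor_bound (INR i * alpha)). lra. }
  exists (j - i)%nat, (Zfloor (INR j * alpha) - Zfloor (INR i * alpha))%Z. split. lia.
  rewrite minus_INR by lia. rewrite minus_IZR.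
  replace ((INR j - INR i) * alpha - (IZR (Zfloor (INR j * alpha)) - IZR (Zfloor (INR i * alpha))))
    with (- (t i - t j)) by (unfold t; ring). rewrite Rabs_Ropp.
  apply Rlt_le_trans with (/ INR K). auto.
  assert (0 < INR K) by (apply lt_0_INR; auto).
  rewrite <- (Rinv_inv d). apply Rinv_le_contravar. apply Rinv_0_lt_compat; auto. lra.
Qed.

Lemma step_dense (delta x0 l r : R) : 0 < Rabs delta < r - l ->
  exists (N : nat) (k : Z), l < x0 + INR N * delta + IZR k < r.
Proof.
  intros [Hd1 Hd2]. destruct (Rlt_le_dec 0 delta) as [Hp|Hn].
  - rewrite Rabs_pos_eq in Hd2 by lra.
    set (k0 := Zfloor (l - x0)). pose proof (Zfloor_bound (l - x0)). fold k0 in H.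
    destruct (nat_above ((l - x0 - IZR k0) / delta)) as [N [HN1 HN2]].
    { unfold Rdiv. apply Rmult_le_pos. lra. left; apply Rinv_0_lt_compat; lra. }
    exists N, k0.
    assert (INR N * delta > l - x0 - IZR k0).
    { apply (Rmult_lt_compat_r delta) in HN2; auto. unfold Rdiv in HN2. rewrite Rmult_assoc, Rinv_l in HN2 by lra. lra. }
    assert ((INR N - 1) * delta <= l - x0 - IZR k0).
    { apply (Rmult_le_compat_r delta) in HN1; [|lra]. unfold Rdiv in HN1. rewrite Rmult_assoc, Rinv_l in HN1 by lra. lra. }
    rewrite Rmult_minus_distr_r in *. lra.
  - assert (delta <> 0). { intro; subst; rewrite Rabs_R0 in Hd1; lra. }
    assert (Hneg : delta < 0) by lra.
    rewrite Rabs_left in Hd2 by lra.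
    set (k0 := (Zfloor (r - x0) + 1)%Z). pose proof (Zfloor_bound (r - x0)).
    assert (Hk0 : r <= x0 + IZR k0) by (unfold k0; rewrite plus_IZR; simpl; lra).
    destruct (nat_above ((x0 + IZR k0 - r) / (- delta))) as [N [HN1 HN2]].
    { unfold Rdiv. apply Rmult_le_pos. lra. left; apply Rinv_0_lt_compat; lra. }
    exists N, k0.
    assert (INR N * (- delta) > x0 + IZR k0 - r).
    { apply (Rmult_lt_compat_r (-delta)) in HN2; [|lra]. unfold Rdiv in HN2. rewrite Rmult_assoc, Rinv_l in HN2 by lra. lra. }
    assert ((INR N - 1) * (- delta) <= x0 + IZR k0 - r).
    { apply (Rmult_le_compat_r (-delta)) in HN1; [|lra]. unfold Rdiv in HN1. rewrite Rmult_assoc, Rinv_l in HN1 by lra. lra. }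
    rewrite Rmult_minus_distr_r in *. lra.
Qed.

Lemma irr_nonint (tau : R) (q : nat) (m : Z) : irrational tau -> (0 < q)%nat -> INR q * tau - IZR m <> 0.
Proof.
  intros Hi Hq Heq. apply Hi. exists m, (Z.of_nat q). split. lia.
  rewrite <- INR_IZR_INZ. assert (0 < INR q) by (apply lt_0_INR; auto).
  apply Rmult_eq_reg_l with (INR q); [| lra]. unfold Rdiv. rewrite <- Rmult_assoc, (Rmult_comm (INR q) (IZR m)), Rmult_assoc, Rinv_r; lra.
Qed.

Lemma dense_orbit (tau c l r : R) : irrational tau -> l < r ->
  exists (n : nat) (k : Z), l < c + INR n * tau + IZR k < r.
Proof.
  intros Hi Hlr. destruct (approx tau (r - l)) as [q [m [Hq Ha]]]. lra.
  destruct (step_dense (INR q * tau - IZR m) c l r) as [N [k Hk]].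
  { split; auto. apply Rabs_pos_lt. apply irr_nonint; auto. }
  exists (N * q)%nat, (k - Z.of_nat N * m)%Z.
  rewrite mult_INR, minus_IZR, mult_IZR, <- INR_IZR_INZ.
  replace (c + INR N * INR q * tau + (IZR k - INR N * IZR m)) with (c + INR N * (INR q * tau - IZR m) + IZR k) by ring.
  auto.
Qed.

Lemma shift_nat (f : R -> R) : (forall x, f (x + 1) = f x + 1) ->
  forall x n, f (x + INR n) = f x + INR n.
Proof.
  intros H x n. induction n. simpl. rewrite !Rplus_0_r. reflexivity.
  rewrite S_INR. replace (x + (INR n + 1)) with (x + INR n + 1) by ring. rewrite H, IHn. ring.
Qed.

Lemma shift_IZR (f : R -> R) : (forall x, f (x + 1) = f x + 1) ->
  forall x k, f (x + IZR k) = f x + IZR k.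
Proof.
  intros H x k. destruct (Z_le_gt_dec 0 k).
  - rewrite <- (Z2Nat.id k) by lia. rewrite <- INR_IZR_INZ. apply shift_nat; auto.
  - assert (k = (- Z.of_nat (Z.to_nat (- k)))%Z) by lia. rewrite H0.
    rewrite opp_IZR, <- INR_IZR_INZ. set (n := Z.to_nat (-k)).
    pose proof (shift_nat f H (x - INR n) n). replace (x - INR n + INR n) with x in H1 by ring.
    replace (x + - INR n) with (x - INR n) by ring. lra.
Qed.

Lemma half_one (f : R -> R) : (forall x, f (x + /2) = f x + /2) -> forall x, f (x + 1) = f x + 1.
Proof.
  intros H x. replace (x + 1) with (x + /2 + /2) by field. rewrite !H. field.
Qed.

Lemma mono_surj_cont (f : R -> R) : (forall x y, x < y -> f x < f y) -> (forall z, exists x, f x = z) -> continuity f.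
Proof.
  intros Hm Hs x eps Heps.
  destruct (Hs (f x - eps)) as [x1 H1]. destruct (Hs (f x + eps)) as [x2 H2].
  assert (x1 < x). { destruct (Rlt_dec x1 x) as [|Hn]; auto. destruct (Req_dec x1 x). subst; lra.
    assert (f x < f x1) by (apply Hm; lra). lra. }
  assert (x < x2). { destruct (Rlt_dec x x2) as [|Hn]; auto. destruct (Req_dec x2 x). subst; lra.
    assert (f x2 < f x) by (apply Hm; lra). lra. }
  exists (Rmin (x - x1) (x2 - x)). split. apply Rmin_glb_lt; lra.
  intros y [_ Hy]. simpl in *. unfold R_dist in *.
  pose proof (Rmin_l (x - x1) (x2 - x)). pose proof (Rmin_r (x - x1) (x2 - x)).
  assert (x1 < y < x2) by (revert Hy; unfold Rabs; destruct Rcase_abs; intros; lra).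
  assert (f x1 < f y) by (apply Hm; lra). assert (f y < f x2) by (apply Hm; lra).
  unfold Rabs; destruct Rcase_abs; lra.
Qed.

Section PG.
Variable G : R -> R.
Hypothesis G_strict : forall x y, x < y -> G x < G y.
Hypothesis G_half : forall x, G (x + /2) = G x + /2.

Lemma G_one x : G (x + 1) = G x + 1. Proof. apply half_one; auto. Qed.
Lemma G_IZR x k : G (x + IZR k) = G x + IZR k. Proof. apply shift_IZR. exact G_one. Qed.

Lemma G_le x y : x <= y -> G x <= G y.
Proof. intros [H|H]. left; auto. subst; lra. Qed.

Lemma G_below x : exists u, G u <= x.
Proof.
  exists (IZR (Zfloor (x - G 0))). pose proof (G_IZR 0 (Zfloor (x - G 0))).
  rewrite Rplus_0_l in H. rewrite H. pose proof (Zfloor_bound (x - G 0)). lra.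
Qed.
Lemma G_above x : exists u, x < G u.
Proof.
  exists (IZR (Zfloor (x - G 0) + 1)). pose proof (G_IZR 0 (Zfloor (x - G 0) + 1)).
  rewrite Rplus_0_l in H. rewrite H. rewrite plus_IZR. pose proof (Zfloor_bound (x - G 0)). simpl. lra.
Qed.

Definition P (x : R) : R := epsilon (inhabits 0) (fun v => is_lub (fun u => G u <= x) v).

Lemma P_lub x : is_lub (fun u => G u <= x) (P x).
Proof.
  unfold P. apply epsilon_spec. destruct (completeness (fun u => G u <= x)) as [m Hm].
  - destruct (G_above x) as [u0 Hu0]. exists u0. intros u Hu.
    destruct (Rle_dec u u0); auto. assert (G u0 < G u) by (apply G_strict; lra). lra.
  - apply G_below.
  - exists m; auto.
Qed.

Lemma P_char_l x v : P x = v -> (forall u, u < v -> G u <= x) /\ (forall u, v < u -> x < G u).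
Proof.
  intros <-. destruct (P_lub x) as [Hub Hl]. split.
  - intros u Hu. destruct (Rle_dec (G u) x) as [|Hn]; auto. exfalso.
    assert (is_upper_bound (fun u => G u <= x) u).
    { intros u' Hu'. destruct (Rle_dec u' u) as [|Hn']; auto. assert (G u < G u') by (apply G_strict; lra). lra. }
    apply Hl in H. lra.
  - intros u Hu. destruct (Rlt_dec x (G u)) as [|Hn]; auto. exfalso.
    assert (u <= P x) by (apply Hub; lra). lra.
Qed.

Lemma P_char_r x v : (forall u, u < v -> G u <= x) -> (forall u, v < u -> x < G u) -> P x = v.
Proof.
  intros H1 H2. apply (is_lub_u (fun u => G u <= x)). apply P_lub. split.
  - intros u Hu. destruct (Rle_dec u v) as [|Hn]; auto. assert (x < G u) by (apply H2; lra). lra.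
  - intros b Hb. destruct (Rle_dec v b) as [|Hn]; auto. exfalso.
    assert (G ((v + b)/2) <= x) by (apply H1; lra). apply Hb in H. lra.
Qed.

Lemma P_G v : P (G v) = v.
Proof. apply P_char_r; intros u Hu. apply G_le; lra. apply G_strict; lra. Qed.

Lemma P_mono x y : x <= y -> P x <= P y.
Proof.
  intros H. destruct (Rle_dec (P x) (P y)) as [|Hn]; auto. exfalso.
  destruct (P_char_l x (P x) eq_refl) as [Hx _]. destruct (P_char_l y (P y) eq_refl) as [_ Hy].
  set (u := (P x + P y)/2). assert (G u <= x) by (apply Hx; unfold u; lra).
  assert (y < G u) by (apply Hy; unfold u; lra). lra.
Qed.

Lemma P_lt_inv x y : P x < P y -> x < y.
Proof. intros H. destruct (Rlt_dec x y) as [|Hn]; auto. assert (P y <= P x) by (apply P_mono; lra). lra. Qed.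

Lemma P_half x : P (x + /2) = P x + /2.
Proof.
  destruct (P_char_l x (P x) eq_refl) as [H1 H2]. apply P_char_r.
  - intros u Hu. replace u with (u - /2 + /2) by ring. rewrite G_half. assert (G (u - /2) <= x) by (apply H1; lra). lra.
  - intros u Hu. replace u with (u - /2 + /2) by ring. rewrite G_half. assert (x < G (u - /2)) by (apply H2; lra). lra.
Qed.

Lemma P_one x : P (x + 1) = P x + 1. Proof. apply half_one. exact P_half. Qed.
Lemma P_IZR x k : P (x + IZR k) = P x + IZR k. Proof. apply shift_IZR. exact P_one. Qed.

Lemma P_cont : continuity P.
Proof.
  intros x eps Heps. set (v := P x). set (e := eps/2).
  destruct (P_char_l x v eq_refl) as [H1 H2].
  assert (Ha : G (v - e) < x). { assert (G (v - e) < G (v - e/2)) by (apply G_strict; unfold e; lra).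
    assert (G (v - e/2) <= x) by (apply H1; unfold e; lra). lra. }
  assert (Hb : x < G (v + e)) by (apply H2; unfold e; lra).
  exists (Rmin (x - G (v - e)) (G (v + e) - x)). split. apply Rmin_glb_lt; lra.
  intros y [_ Hy]. simpl in Hy. unfold R_dist in Hy |- *. simpl. unfold R_dist.
  pose proof (Rmin_l (x - G (v - e)) (G (v + e) - x)). pose proof (Rmin_r (x - G (v - e)) (G (v + e) - x)).
  assert (Hy1 : G (v - e) < y < G (v + e)) by (revert Hy; unfold Rabs; destruct Rcase_abs; intros; lra).
  destruct (P_char_l y (P y) eq_refl) as [K1 K2].
  assert (P y >= v - e). { destruct (Rge_dec (P y) (v - e)) as [|Hn]; auto. assert (y < G (v - e)) by (apply K2; lra). lra. }
  assert (P y <= v + e). { destruct (Rle_dec (P y) (v + e)) as [|Hn]; auto. assert (G (v + e) <= y) by (apply K1; lra). lra. }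
  fold v. unfold Rabs; destruct Rcase_abs; unfold e in *; lra.
Qed.

Lemma P_bound x : Rabs (P x - x) <= Rabs (P 0) + 1.
Proof.
  set (k := Zfloor x). pose proof (Zfloor_bound x). fold k in H.
  pose proof (P_IZR 0 k). pose proof (P_IZR 0 (k + 1)). rewrite plus_IZR in H1. rewrite Rplus_0_l in H0, H1.
  assert (P (IZR k) <= P x) by (apply P_mono; lra). assert (P x <= P (IZR k + 1)) by (apply P_mono; lra).
  unfold Rabs in *; repeat destruct Rcase_abs; lra.
Qed.

Lemma P_pre_exists v : exists a b, a <= b /\ forall x, P x = v <-> a <= x <= b.
Proof.
  destruct (completeness (fun x => P x < v)) as [a [Ha1 Ha2]].
  { exists (G v). intros x Hx. destruct (Rle_dec x (G v)) as [|Hn]; auto.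
    assert (P (G v) <= P x) by (apply P_mono; lra). rewrite P_G in H. lra. }
  { exists (G (v - 1)). rewrite P_G. lra. }
  destruct (completeness (fun x => P x <= v)) as [b [Hb1 Hb2]].
  { exists (G (v + 1)). intros x Hx. destruct (Rle_dec x (G (v+1))) as [|Hn]; auto.
    assert (P (G (v+1)) <= P x) by (apply P_mono; lra). rewrite P_G in H. lra. }
  { exists (G v). rewrite P_G. lra. }
  assert (HPa : P a = v).
  { destruct (Rtotal_order (P a) v) as [Hlt|[Heq|Hgt]]; auto; exfalso.
    - destruct (P_cont a (v - P a)) as [d [Hd Hc]]. lra.
      assert (P (a + d/2) < v).
      { assert (R_dist (P (a + d/2)) (P a) < v - P a). apply Hc. split. split. exact I. lra. simpl. unfold R_dist.
        replace (a + d/2 - a) with (d/2) by ring. rewrite Rabs_pos_eq; lra.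
        unfold R_dist in H. revert H; unfold Rabs; destruct Rcase_abs; intros; lra. }
      apply Ha1 in H. lra.
    - destruct (P_cont a (P a - v)) as [d [Hd Hc]]. lra.
      assert (v < P (a - d/2)).
      { assert (R_dist (P (a - d/2)) (P a) < P a - v). apply Hc. split. split. exact I. lra. simpl. unfold R_dist.
        replace (a - d/2 - a) with (-(d/2)) by ring. rewrite Rabs_Ropp, Rabs_pos_eq; lra.
        unfold R_dist in H. revert H; unfold Rabs; destruct Rcase_abs; intros; lra. }
      assert (is_upper_bound (fun x => P x < v) (a - d/2)).
      { intros x Hx. destruct (Rle_dec x (a - d/2)) as [|Hn]; auto.
        assert (P (a - d/2) <= P x) by (apply P_mono; lra). lra. }
      apply Ha2 in H0. lra. }
  assert (HPb : P b = v).
  { destruct (Rtotal_order (P b) v) as [Hlt|[Heq|Hgt]]; auto; exfalso.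
    - destruct (P_cont b (v - P b)) as [d [Hd Hc]]. lra.
      assert (P (b + d/2) < v).
      { assert (R_dist (P (b + d/2)) (P b) < v - P b). apply Hc. split. split. exact I. lra. simpl. unfold R_dist.
        replace (b + d/2 - b) with (d/2) by ring. rewrite Rabs_pos_eq; lra.
        unfold R_dist in H. revert H; unfold Rabs; destruct Rcase_abs; intros; lra. }
      assert (b + d/2 <= b) by (apply Hb1; lra). lra.
    - destruct (P_cont b (P b - v)) as [d [Hd Hc]]. lra.
      assert (v < P (b - d/2)).
      { assert (R_dist (P (b - d/2)) (P b) < P b - v). apply Hc. split. split. exact I. lra. simpl. unfold R_dist.
        replace (b - d/2 - b) with (-(d/2)) by ring. rewrite Rabs_Ropp, Rabs_pos_eq; lra.
        unfold R_dist in H. revert H; unfold Rabs; destruct Rcase_abs; intros; lra. }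
      assert (is_upper_bound (fun x => P x <= v) (b - d/2)).
      { intros x Hx. destruct (Rle_dec x (b - d/2)) as [|Hn]; auto.
        assert (P (b - d/2) <= P x) by (apply P_mono; lra). lra. }
      apply Hb2 in H0. lra. }
  exists a, b. split. apply Hb1. lra.
  intros x; split.
  - intros Hx. split.
    + destruct (Rle_dec a x) as [|Hn]; auto. exfalso.
      assert (is_upper_bound (fun x => P x < v) x).
      { intros y Hy. destruct (Rle_dec y x) as [|Hn']; auto. assert (P x <= P y) by (apply P_mono; lra). lra. }
      apply Ha2 in H. lra.
    + apply Hb1. lra.
  - intros [H1 H2]. assert (P a <= P x) by (apply P_mono; lra). assert (P x <= P b) by (apply P_mono; lra). lra.
Qed.

Definition ab (v : R) : R * R :=
  epsilon (inhabits (0,0)) (fun p => fst p <= snd p /\ forall x, P x = v <-> fst p <= x <= snd p).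
Definition aa v := fst (ab v).
Definition bb v := snd (ab v).

Lemma ab_spec v : aa v <= bb v /\ forall x, P x = v <-> aa v <= x <= bb v.
Proof.
  unfold aa, bb, ab. apply epsilon_spec. destruct (P_pre_exists v) as [a [b H]]. exists (a, b). exact H.
Qed.

Lemma ab_unique v a b : (forall x, P x = v <-> a <= x <= b) -> a <= b -> aa v = a /\ bb v = b.
Proof.
  intros H Hab. destruct (ab_spec v) as [H0 H1].
  assert (P a = v) by (apply H; lra). assert (P b = v) by (apply H; lra).
  assert (P (aa v) = v) by (apply H1; lra). assert (P (bb v) = v) by (apply H1; lra).
  apply H1 in H2. apply H1 in H3. apply H in H4. apply H in H5. split; lra.
Qed.

Lemma P_aa v : P (aa v) = v. Proof. destruct (ab_spec v) as [H0 H1]. apply H1; lra. Qed.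
Lemma P_bb v : P (bb v) = v. Proof. destruct (ab_spec v) as [H0 H1]. apply H1; lra. Qed.
Lemma aa_le x : aa (P x) <= x. Proof. destruct (ab_spec (P x)) as [H0 H1]. apply H1; auto. Qed.
Lemma bb_ge x : x <= bb (P x). Proof. destruct (ab_spec (P x)) as [H0 H1]. apply H1; auto. Qed.

Lemma ab_shift (c : R) : (forall x, P (x + c) = P x + c) ->
  forall v, aa (v + c) = aa v + c /\ bb (v + c) = bb v + c.
Proof.
  intros Hc v. apply ab_unique. 2: destruct (ab_spec v); lra.
  intros x. destruct (ab_spec v) as [H0 H1]. specialize (H1 (x - c)).
  pose proof (Hc (x - c)) as E. replace (x - c + c) with x in E by ring.
  rewrite E. split; intros H.
  assert (P (x - c) = v) by lra. apply H1 in H2. lra.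
  assert (P (x - c) = v) by (apply H1; lra). lra.
Qed.


Variable Spred : R -> Prop.
Hypothesis G_cont : forall v, ~ Spred v -> forall d, 0 < d -> exists u' u, u' < v < u /\ G u - G u' < d.
Hypothesis G_jump : forall v, Spred v -> exists c, 0 < c /\ forall u' u, u' < v <= u -> c <= G u - G u'.

Lemma ab_lt_iff v : aa v < bb v <-> Spred v.
Proof.
  destruct (ab_spec v) as [H0 H1]. split.
  - intros H. destruct (classic (Spred v)) as [|Hn]; auto. exfalso.
    destruct (G_cont v Hn (bb v - aa v)) as [u' [u [Hu Hd]]]. lra.
    destruct (P_char_l (aa v) v (P_aa v)) as [K1 _]. destruct (P_char_l (bb v) v (P_bb v)) as [_ K2].
    assert (G u' <= aa v) by (apply K1; lra). assert (bb v < G u) by (apply K2; lra). lra.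
  - intros HS. destruct (G_jump v HS) as [c [Hc Hj]].
    assert (P (G v - c) = v).
    { apply P_char_r. intros u Hu. assert (c <= G v - G u) by (apply Hj; lra). lra.
      intros u Hu. assert (G v < G u) by (apply G_strict; lra). lra. }
    assert (aa v <= G v - c <= bb v) by (apply H1; auto).
    assert (aa v <= G v <= bb v) by (apply H1; apply P_G). lra.
Qed.

Lemma ab_eq_not v : ~ Spred v -> aa v = bb v.
Proof. intros H. destruct (ab_spec v). destruct (Rle_lt_or_eq_dec _ _ H0); auto. apply ab_lt_iff in r. tauto. Qed.

Variable tau : R.
Hypothesis S_tau : forall v, Spred (v + tau) <-> Spred v.

Definition F x := aa (P x + tau) + (x - aa (P x)) * (bb (P x + tau) - aa (P x + tau)) / (bb (P x) - aa (P x)).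

Lemma PF x : P (F x) = P x + tau.
Proof.
  set (v := P x). destruct (ab_spec v) as [H0 H1]. destruct (ab_spec (v + tau)) as [H0' H1'].
  assert (Hx : aa v <= x <= bb v) by (apply H1; reflexivity).
  apply H1'. unfold F. fold v.
  destruct (Rle_lt_or_eq_dec _ _ H0) as [Hlt|Heq].
  - set (t := (x - aa v) / (bb v - aa v)).
    assert (Ht : t * (bb v - aa v) = x - aa v) by (unfold t; field; lra).
    assert (0 <= t <= 1) by (split; nra).
    replace ((x - aa v) * (bb (v + tau) - aa (v + tau)) / (bb v - aa v)) with (t * (bb (v + tau) - aa (v + tau)))
      by (unfold t; field; lra). nra.
  - assert (x = aa v) by lra. rewrite H. replace (aa v - aa v) with 0 by ring. unfold Rdiv. rewrite !Rmult_0_l, Rplus_0_r. lra.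
Qed.

Lemma F_strict x y : x < y -> F x < F y.
Proof.
  intros H. assert (P x <= P y) by (apply P_mono; lra). destruct (Rle_lt_or_eq_dec _ _ H0) as [Hlt|Heq].
  - apply P_lt_inv. rewrite !PF. lra.
  - set (v := P x). destruct (ab_spec v) as [H1 H2].
    assert (aa v <= x <= bb v) by (apply H2; reflexivity). assert (aa v <= y <= bb v) by (apply H2; unfold v; auto).
    assert (Hs : Spred v) by (apply ab_lt_iff; lra). apply S_tau in Hs. apply ab_lt_iff in Hs.
    unfold F. rewrite <- Heq. fold v.
    assert (0 < (y - x) * (bb (v + tau) - aa (v + tau)) / (bb v - aa v)).
    { apply Rdiv_lt_0_compat. apply Rmult_lt_0_compat; lra. lra. }
    replace ((y - aa v) * (bb (v + tau) - aa (v + tau)) / (bb v - aa v)) with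
      ((x - aa v) * (bb (v + tau) - aa (v + tau)) / (bb v - aa v) + (y - x) * (bb (v + tau) - aa (v + tau)) / (bb v - aa v)) by (field; lra).
    lra.
Qed.

Lemma F_half x : F (x + /2) = F x + /2.
Proof.
  unfold F. rewrite P_half. set (v := P x).
  replace (v + /2 + tau) with ((v + tau) + /2) by ring.
  destruct (ab_shift (/2) P_half v) as [E1 E2]. destruct (ab_shift (/2) P_half (v + tau)) as [E3 E4].
  rewrite E1, E2, E3, E4.
  replace (x + /2 - (aa v + /2)) with (x - aa v) by ring.
  replace (bb (v + tau) + /2 - (aa (v + tau) + /2)) with (bb (v + tau) - aa (v + tau)) by ring.
  replace (bb v + /2 - (aa v + /2)) with (bb v - aa v) by ring. ring.
Qed.

Lemma F_one x : F (x + 1) = F x + 1. Proof. apply half_one. exact F_half. Qed.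

Lemma F_surj z : exists x, F x = z.
Proof.
  set (v' := P z). set (v := v' - tau).
  destruct (ab_spec v') as [H0' H1']. destruct (ab_spec v) as [H0 H1].
  assert (Hz : aa v' <= z <= bb v') by (apply H1'; reflexivity).
  assert (Hvv : v + tau = v') by (unfold v; ring).
  destruct (Rle_lt_or_eq_dec _ _ H0') as [Hlt|Heq].
  - assert (Hs : Spred v') by (apply ab_lt_iff; auto). rewrite <- Hvv in Hs. apply (proj1 (S_tau v)), ab_lt_iff in Hs.
    set (x := aa v + (z - aa v') * (bb v - aa v) / (bb v' - aa v')).
    assert (Hx : P x = v).
    { apply H1. unfold x. split.
      assert (0 <= (z - aa v') * (bb v - aa v) / (bb v' - aa v')) by (unfold Rdiv; apply Rmult_le_pos; [nra | left; apply Rinv_0_lt_compat; lra]). lra.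
      assert ((z - aa v') * (bb v - aa v) / (bb v' - aa v') <= bb v - aa v).
      { set (t := (z - aa v') / (bb v' - aa v')).
        assert (Ht : t * (bb v' - aa v') = z - aa v') by (unfold t; field; lra).
        assert (t <= 1) by nra.
        replace ((z - aa v') * (bb v - aa v) / (bb v' - aa v')) with (t * (bb v - aa v)) by (unfold t; field; lra).
        nra. } lra. }
    exists x. unfold F. rewrite Hx, Hvv. unfold x. field. split; lra.
  - exists (aa v). unfold F. rewrite P_aa, Hvv. replace (aa v - aa v) with 0 by ring. unfold Rdiv. rewrite !Rmult_0_l, Rplus_0_r. lra.
Qed.

Lemma F_cont : continuity F.
Proof. apply mono_surj_cont. exact F_strict. exact F_surj. Qed.

Lemma P_iter n x : P (Nat.iter n F x) = P x + INR n * tau.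
Proof. induction n. simpl. ring. rewrite S_INR. simpl. rewrite PF, IHn. ring. Qed.

Lemma F_rot x : Un_cv (fun n => (Nat.iter (S n) F x - x) / INR (S n)) tau.
Proof.
  set (B := Rabs (P 0) + 1).
  assert (HB : 0 < B) by (unfold B; pose proof (Rabs_pos (P 0)); lra).
  intros eps Heps.
  destruct (archimed (2 * B / eps)) as [Hup _].
  exists (Z.to_nat (up (2 * B / eps))). intros n Hn. unfold R_dist.
  set (y := Nat.iter (S n) F x). pose proof (P_iter (S n) x). fold y in H.
  pose proof (P_bound y). pose proof (P_bound x). fold B in H0, H1.
  assert (HN : 2 * B / eps < INR (S n)).
  { apply Rlt_le_trans with (IZR (up (2 * B / eps))). lra.
    destruct (Z_le_gt_dec 0 (up (2 * B / eps))).
    rewrite <- (Z2Nat.id (up _)) by auto. rewrite <- INR_IZR_INZ. apply le_INR. lia.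
    apply Rle_trans with 0. apply IZR_le; lia. apply pos_INR. }
  assert (HSn : 0 < INR (S n)) by (apply lt_0_INR; lia).
  assert (Habs : Rabs (y - x - INR (S n) * tau) <= 2 * B).
  { replace (y - x - INR (S n) * tau) with (-(P y - y) + (P x - x)) by (rewrite H; ring).
    eapply Rle_trans. apply Rabs_triang. rewrite Rabs_Ropp. lra. }
  replace ((y - x) / INR (S n) - tau) with ((y - x - INR (S n) * tau) / INR (S n)) by (field; lra).
  unfold Rdiv. rewrite Rabs_mult, Rabs_inv, (Rabs_pos_eq (INR (S n))) by lra.
  apply Rle_lt_trans with (2 * B * / INR (S n)). apply Rmult_le_compat_r. left; apply Rinv_0_lt_compat; lra. auto.
  apply (Rmult_lt_reg_r (INR (S n))). lra. rewrite Rmult_assoc, Rinv_l by lra. rewrite Rmult_1_r.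
  unfold Rdiv in HN. apply (Rmult_lt_compat_l eps) in HN; [|lra].
  replace (eps * (2*B*/eps)) with (2*B) in HN by (field; lra). lra.
Qed.


Variable phi : R.
Hypothesis Hirr : irrational tau.
Hypothesis S_orb : forall (n : nat) (k : Z), Spred (phi + INR n * tau + IZR k).

Definition E (x : R) : Prop := forall eps, 0 < eps -> P (x - eps) < P (x + eps).

Lemma E_char x : E x <-> ~ (aa (P x) < x < bb (P x)).
Proof.
  destruct (ab_spec (P x)) as [H0 H1]. split.
  - intros HE [Ha Hb]. set (e := Rmin (x - aa (P x)) (bb (P x) - x)).
    assert (0 < e) by (apply Rmin_glb_lt; lra).
    pose proof (Rmin_l (x - aa (P x)) (bb (P x) - x)). pose proof (Rmin_r (x - aa (P x)) (bb (P x) - x)). fold e in H2, H3.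
    assert (P (x - e) = P x) by (apply H1; lra). assert (P (x + e) = P x) by (apply H1; lra).
    specialize (HE e H). lra.
  - intros Hn eps Heps. assert (P (x - eps) <= P x) by (apply P_mono; lra).
    assert (P x <= P (x + eps)) by (apply P_mono; lra).
    destruct (Rle_lt_or_eq_dec _ _ H) as [|E1]; [lra|]. destruct (Rle_lt_or_eq_dec _ _ H2) as [|E2]; [lra|].
    exfalso. apply Hn. symmetry in E2. apply H1 in E1. apply H1 in E2. lra.
Qed.

Lemma E_aa v : E (aa v). Proof. apply E_char. rewrite P_aa. lra. Qed.
Lemma E_bb v : E (bb v). Proof. apply E_char. rewrite P_bb. lra. Qed.
Lemma E_int v y : aa v < y < bb v -> ~ E y.
Proof. intros H HE. apply E_char in HE. destruct (ab_spec v) as [H0 H1]. assert (P y = v) by (apply H1; lra). rewrite H2 in HE. tauto. Qed.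

Lemma E_shift c : (forall x, P (x + c) = P x + c) -> forall x, E (x + c) <-> E x.
Proof.
  intros Hc x. unfold E. split; intros H eps Heps; specialize (H eps Heps).
  - replace (x + c - eps) with ((x - eps) + c) in H by ring. replace (x + c + eps) with ((x + eps) + c) in H by ring.
    rewrite !Hc in H. lra.
  - replace (x + c - eps) with ((x - eps) + c) by ring. replace (x + c + eps) with ((x + eps) + c) by ring.
    rewrite !Hc. lra.
Qed.

Lemma E_circ : circ_set E.
Proof. intros x. rewrite (E_shift 1 P_one). tauto. Qed.
Lemma E_half x : E (x + /2) <-> E x. Proof. apply E_shift. exact P_half. Qed.

Lemma E_closed : Defs.closed_set E.
Proof.
  intros z Hz. apply E_char. intros [Ha Hb]. set (e := Rmin (z - aa (P z)) (bb (P z) - z)).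
  assert (0 < e) by (apply Rmin_glb_lt; lra).
  pose proof (Rmin_l (z - aa (P z)) (bb (P z) - z)). pose proof (Rmin_r (z - aa (P z)) (bb (P z) - z)). fold e in H0, H1.
  destruct (Hz e H) as [y [Hy Hyz]].
  apply (E_int (P z) y); auto. revert Hyz; unfold Rabs; destruct Rcase_abs; intros; lra.
Qed.

Lemma S_between p q : P p < P q -> exists v, Spred v /\ P p < v < P q.
Proof.
  intros H. destruct (dense_orbit tau phi (P p) (P q) Hirr H) as [n [k Hk]].
  exists (phi + INR n * tau + IZR k). split; auto.
Qed.

Lemma gap_flat p q : p < q -> (forall y, p < y < q -> ~ E y) -> P p = P q.
Proof.
  intros Hpq Hg. assert (P p <= P q) by (apply P_mono; lra).
  destruct (Rle_lt_or_eq_dec _ _ H) as [Hlt|]; auto. exfalso.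
  destruct (S_between p q Hlt) as [v [Hv [H1 H2]]].
  apply (Hg (aa v)). split. apply P_lt_inv. rewrite P_aa; auto. apply P_lt_inv. rewrite P_aa; auto. apply E_aa.
Qed.

Lemma E_inv : invariant F E.
Proof.
  intros x. split.
  - intros HE. apply NNPP. intros Hn. unfold E in Hn. apply not_all_ex_not in Hn. destruct Hn as [eps Hn].
    apply imply_to_and in Hn. destruct Hn as [Heps Hn].
    assert (Heq : P (F x - eps) = P (F x + eps)).
    { assert (P (F x - eps) <= P (F x + eps)) by (apply P_mono; lra). lra. }
    destruct (F_cont x eps Heps) as [d [Hd Hc]].
    assert (K1 : R_dist (F (x - d/2)) (F x) < eps). { apply Hc. split. split. exact I. lra. simpl. unfold R_dist.
      replace (x - d/2 - x) with (-(d/2)) by ring. rewrite Rabs_Ropp, Rabs_pos_eq; lra. }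
    assert (K2 : R_dist (F (x + d/2)) (F x) < eps). { apply Hc. split. split. exact I. lra. simpl. unfold R_dist.
      replace (x + d/2 - x) with (d/2) by ring. rewrite Rabs_pos_eq; lra. }
    unfold R_dist in K1, K2.
    assert (F x - eps < F (x - d/2)) by (revert K1; unfold Rabs; destruct Rcase_abs; intros; lra).
    assert (F (x + d/2) < F x + eps) by (revert K2; unfold Rabs; destruct Rcase_abs; intros; lra).
    assert (P (F x - eps) <= P (F (x - d/2))) by (apply P_mono; lra).
    assert (P (F (x + d/2)) <= P (F x + eps)) by (apply P_mono; lra).
    assert (P (F (x - d/2)) <= P (F (x + d/2))) by (apply P_mono; left; apply F_strict; lra).
    rewrite !PF in *. specialize (HE (d/2) ltac:(lra)). lra.
  - intros HE. apply NNPP. intros Hn. unfold E in Hn. apply not_all_ex_not in Hn. destruct Hn as [eps Hn].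
    apply imply_to_and in Hn. destruct Hn as [Heps Hn].
    assert (Heq : P (x - eps) = P (x + eps)).
    { assert (P (x - eps) <= P (x + eps)) by (apply P_mono; lra). lra. }
    assert (Q1 : F (x - eps) < F x) by (apply F_strict; lra). assert (Q2 : F x < F (x + eps)) by (apply F_strict; lra).
    set (e := Rmin (F x - F (x - eps)) (F (x + eps) - F x)).
    assert (Q3 : 0 < e) by (apply Rmin_glb_lt; lra).
    pose proof (Rmin_l (F x - F (x - eps)) (F (x + eps) - F x)) as Q4. pose proof (Rmin_r (F x - F (x - eps)) (F (x + eps) - F x)) as Q5.
    fold e in Q4, Q5.
    specialize (HE e Q3).
    assert (P (F (x - eps)) <= P (F x - e)) by (apply P_mono; lra).
    assert (P (F x + e) <= P (F (x + eps))) by (apply P_mono; lra).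
    rewrite !PF in *. lra.
Qed.

Lemma circ_nat (D : R -> Prop) : circ_set D -> forall x n, D x <-> D (x + INR n).
Proof.
  intros Hc x n. induction n. simpl. rewrite Rplus_0_r. tauto.
  rewrite S_INR. replace (x + (INR n + 1)) with (x + INR n + 1) by ring. rewrite <- (Hc (x + INR n)). auto.
Qed.

Lemma circ_IZR (D : R -> Prop) : circ_set D -> forall x k, D x <-> D (x + IZR k).
Proof.
  intros Hc x k. destruct (Z_le_gt_dec 0 k).
  - rewrite <- (Z2Nat.id k) by lia. rewrite <- INR_IZR_INZ. apply circ_nat; auto.
  - assert (k = (- Z.of_nat (Z.to_nat (- k)))%Z) by lia. rewrite H.
    rewrite opp_IZR, <- INR_IZR_INZ. set (n := Z.to_nat (-k)).
    pose proof (circ_nat D Hc (x - INR n) n). replace (x - INR n + INR n) with x in H0 by ring.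
    replace (x + - INR n) with (x - INR n) by ring. tauto.
Qed.

Lemma inv_iter (D : R -> Prop) : invariant F D -> forall n x, D x -> D (Nat.iter n F x).
Proof. intros Hi n. induction n; intros x Hx. auto. simpl. apply (proj1 (Hi _)). auto. Qed.

Lemma E_sub (D : R -> Prop) : circ_set D -> Defs.closed_set D -> (exists x, D x) -> invariant F D ->
  forall z, E z -> D z.
Proof.
  intros Hc Hcl [d Hd] Hi z Hz. apply Hcl. intros eps Heps.
  specialize (Hz eps Heps).
  destruct (dense_orbit tau (P d) (P (z - eps)) (P (z + eps)) Hirr Hz) as [n [k Hk]].
  exists (Nat.iter n F d + IZR k). split.
  - apply circ_IZR; auto. apply inv_iter; auto.
  - rewrite <- P_iter, <- P_IZR in Hk. destruct Hk.
    apply P_lt_inv in H. apply P_lt_inv in H0. unfold Rabs; destruct Rcase_abs; lra.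
Qed.

Lemma E_nonempty : exists x, E x. Proof. exists (aa 0). apply E_aa. Qed.

Lemma E_minimal : minimal_set F E.
Proof.
  split. apply E_circ. split. apply E_closed. split. apply E_nonempty. split. apply E_inv.
  intros D Hc Hcl Hne Hi _. apply E_sub; auto.
Qed.

Lemma minimal_is_E (C : R -> Prop) : minimal_set F C -> C = E.
Proof.
  intros [Hc [Hcl [Hne [Hi Hmin]]]].
  assert (H1 : forall x, E x -> C x) by (apply E_sub; auto).
  assert (H2 : forall x, C x -> E x).
  { apply (Hmin E E_circ E_closed E_nonempty E_inv H1). }
  apply functional_extensionality. intros x. apply propositional_extensionality. split; auto.
Qed.

Lemma E_cantor : cantor_set E.
Proof.
  split. apply E_circ. split. apply E_closed. split. apply E_nonempty. split.
  - intros a b Hab. assert (P a <= P b) by (apply P_mono; lra).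
    destruct (Rle_lt_or_eq_dec _ _ H) as [Hlt|Heq].
    + destruct (S_between a b Hlt) as [v [Hv [H1 H2]]].
      apply ab_lt_iff in Hv. exists ((aa v + bb v)/2).
      assert (P ((aa v + bb v)/2) = v) by (apply (proj2 (ab_spec v)); lra).
      split. split; left; apply P_lt_inv; lra.
      apply (E_int v). lra.
    + exists ((a + b)/2). split. lra. intros HE. specialize (HE ((b - a)/2) ltac:(lra)).
      replace ((a + b)/2 - (b - a)/2) with a in HE by field. replace ((a + b)/2 + (b - a)/2) with b in HE by field. lra.
  - intros x Hx eps Heps. specialize (Hx eps Heps).
    destruct (Rlt_or_le (P x) (P (x + eps))) as [Hlt|Hle].
    + destruct (S_between x (x + eps) Hlt) as [v [Hv [H1 H2]]].
      exists (bb v). rewrite <- (P_bb v) in H1, H2. apply P_lt_inv in H1. apply P_lt_inv in H2.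
      split. apply E_bb. split. lra. rewrite Rabs_pos_eq; lra.
    + assert (Hlt : P (x - eps) < P x) by lra.
      destruct (S_between (x - eps) x Hlt) as [v [Hv [H1 H2]]].
      exists (aa v). rewrite <- (P_aa v) in H1, H2. apply P_lt_inv in H1. apply P_lt_inv in H2.
      split. apply E_aa. split. lra. rewrite Rabs_left; lra.
Qed.

Lemma gap_E_flat p q : gap E p q -> P p = P q /\ Spred (P p).
Proof.
  intros [Hpq [Hp [Hq Hg]]]. assert (HPq : P p = P q) by (apply gap_flat; auto). split; auto.
  apply ab_lt_iff. destruct (ab_spec (P p)) as [H0 H1].
  assert (aa (P p) <= p <= bb (P p)) by (apply H1; auto). assert (aa (P p) <= q <= bb (P p)) by (apply H1; auto). lra.
Qed.

Lemma gap_E_ab v : Spred v -> gap E (aa v) (bb v).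
Proof.
  intros Hv. apply ab_lt_iff in Hv. split. auto. split. apply E_aa. split. apply E_bb.
  intros y Hy. apply (E_int v); auto.
Qed.

Lemma eqT_P t1 k : P (t1 + IZR k) = P t1 + IZR k. Proof. apply P_IZR. Qed.

Lemma E_cantor_fun : cantor_function E P.
Proof.
  split. apply P_cont. split. apply P_mono. split. apply P_one.
  intros t1 t2. split.
  - intros [k Hk]. assert (Hv : P t2 = P (t1 + IZR k)) by (rewrite P_IZR; lra).
    destruct (Req_dec (t1 + IZR k) t2) as [Heq|Hne].
    + left. exists k. lra.
    + right. set (v := P t2). destruct (ab_spec v) as [H0 H1].
      assert (A1 : aa v <= t1 + IZR k <= bb v) by (apply H1; unfold v; auto).
      assert (A2 : aa v <= t2 <= bb v) by (apply H1; reflexivity).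
      assert (Hs : Spred v) by (apply ab_lt_iff; lra).
      exists k, 0%Z, (aa v), (bb v). split. apply gap_E_ab; auto. split. auto. rewrite Rplus_0_r. auto.
  - intros [[k Hk]|[k1 [k2 [a [b [Hg [H1 H2]]]]]]].
    + exists k. replace t2 with (t1 + IZR k) by lra. rewrite P_IZR. ring.
    + destruct (gap_E_flat a b Hg) as [Hab _].
      assert (P a <= P (t1 + IZR k1) <= P b) by (split; apply P_mono; lra).
      assert (P a <= P (t2 + IZR k2) <= P b) by (split; apply P_mono; lra).
      rewrite !P_IZR in *. exists (k1 - k2)%Z. rewrite minus_IZR. lra.
Qed.

Lemma eqT_refl x : eqT x x. Proof. exists 0%Z. simpl; ring. Qed.
Lemma eqT_sym x y : eqT x y -> eqT y x. Proof. intros [k H]. exists (-k)%Z. rewrite opp_IZR. lra. Qed.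
Lemma eqT_trans x y z : eqT x y -> eqT y z -> eqT x z.
Proof. intros [k H] [k' H']. exists (k + k')%Z. rewrite plus_IZR. lra. Qed.

Lemma homeo_inj (H : R -> R) : circle_homeo H -> forall x y, eqT (H x) (H y) -> eqT x y.
Proof.
  intros [Hc [[Hm Hp]|[Hm Hp]]] x y [k Hk].
  - pose proof (shift_IZR H Hp x k). exists k.
    destruct (Rtotal_order y (x + IZR k)) as [Hl|[He|Hg]]. apply Hm in Hl. lra. lra. apply Hm in Hg. lra.
  - set (H' := fun x => - H x). assert (Hp' : forall x, H' (x + 1) = H' x + 1) by (intros; unfold H'; rewrite Hp; ring).
    pose proof (shift_IZR H' Hp' x (-k)). unfold H' in H0. rewrite opp_IZR in H0. exists (-k)%Z. rewrite opp_IZR.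
    destruct (Rtotal_order y (x + - IZR k)) as [Hl|[He|Hg]]. apply Hm in Hl. lra. lra. apply Hm in Hg. lra.
Qed.

Lemma homeo_strict_ne (H : R -> R) : circle_homeo H -> forall x y, x < y -> H x <> H y.
Proof. intros [Hc [[Hm Hp]|[Hm Hp]]] x y Hxy; specialize (Hm x y Hxy); lra. Qed.

Lemma ivt_between (H : R -> R) a b t : continuity H -> a <= b ->
  Rmin (H a) (H b) <= t <= Rmax (H a) (H b) -> exists y, a <= y <= b /\ H y = t.
Proof.
  intros Hc Hab Ht. destruct (IVT_cor (fun x => H x - t) a b) as [y [Hy Hyt]].
  apply continuity_minus; auto. apply continuity_const. intros ? ?; auto. auto.
  unfold Rmin, Rmax in Ht. destruct (Rle_dec (H a) (H b)); nra.
  exists y. split; auto. lra.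
Qed.

Lemma choose_xy (H : R -> R) a b e : continuity H -> a <= b -> Rabs e <= Rabs (H b - H a) ->
  exists x y, a <= x <= b /\ a <= y <= b /\ H y = H x + e.
Proof.
  intros Hc Hab He.
  destruct (Rle_dec (H a) (H b)) as [Hl|Hl]; destruct (Rle_dec 0 e) as [He0|He0].
  - rewrite Rabs_pos_eq in He by lra. rewrite Rabs_pos_eq in He by lra.
    destruct (ivt_between H a b (H a + e) Hc Hab) as [y [Hy Hy']].
    { unfold Rmin, Rmax; destruct Rle_dec; lra. }
    exists a, y. repeat split; lra.
  - rewrite Rabs_left in He by lra. rewrite Rabs_pos_eq in He by lra.
    destruct (ivt_between H a b (H b + e) Hc Hab) as [y [Hy Hy']].
    { unfold Rmin, Rmax; destruct Rle_dec; lra. }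
    exists b, y. repeat split; lra.
  - rewrite Rabs_pos_eq in He by lra. rewrite Rabs_left in He by lra.
    destruct (ivt_between H a b (H b + e) Hc Hab) as [y [Hy Hy']].
    { unfold Rmin, Rmax; destruct Rle_dec; lra. }
    exists b, y. repeat split; lra.
  - rewrite Rabs_left in He by lra. rewrite Rabs_left in He by lra.
    destruct (ivt_between H a b (H a + e) Hc Hab) as [y [Hy Hy']].
    { unfold Rmin, Rmax; destruct Rle_dec; lra. }
    exists a, y. repeat split; lra.
Qed.

Lemma not_conj : ~ conj_to_rotation F.
Proof.
  intros [H [alpha [Hh Hconj]]].
  assert (Hphi : Spred phi). { pose proof (S_orb 0 0). simpl in H0. rewrite Rmult_0_l, !Rplus_0_r in H0. auto. }
  apply ab_lt_iff in Hphi. set (a := aa phi) in *. set (b := bb phi) in *.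
  assert (Hd : 0 < Rabs (H b - H a)).
  { apply Rabs_pos_lt. pose proof (homeo_strict_ne H Hh a b Hphi). lra. }
  destruct (approx alpha (Rabs (H b - H a)) Hd) as [q [m [Hq Ha]]].
  destruct (choose_xy H a b (INR q * alpha - IZR m)) as [x [y [Hx [Hy Hxy]]]].
  apply (proj1 Hh). lra. lra.
  assert (Hit : forall n z, eqT (H (Nat.iter n F z)) (H z + INR n * alpha)).
  { induction n; intros z. simpl. exists 0%Z. simpl. ring.
    change (Nat.iter (S n) F z) with (F (Nat.iter n F z)).
    eapply eqT_trans. apply Hconj. destruct (IHn z) as [k Hk]. exists k. rewrite S_INR. lra. }
  assert (eqT (H (Nat.iter q F x)) (H y)).
  { eapply eqT_trans. apply Hit. exists (- m)%Z. rewrite opp_IZR. lra. }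
  apply homeo_inj in H0; auto. destruct H0 as [k Hk].
  assert (P y = phi) by (apply (proj2 (ab_spec phi)); auto).
  assert (P x = phi) by (apply (proj2 (ab_spec phi)); auto).
  replace y with (Nat.iter q F x + IZR k) in H0 by lra.
  rewrite P_IZR, P_iter, H1 in H0.
  apply (irr_nonint tau q (-k) Hirr Hq). rewrite opp_IZR. lra.
Qed.

End PG.

Definition enum (k : nat) : Z :=
  if Nat.even k then Z.of_nat (Nat.div2 k) else (- Z.of_nat (Nat.div2 (S k)))%Z.

Lemma even_facts j : Nat.even (2*j) = true /\ Nat.div2 (2*j) = j /\ Nat.even (S (2*j)) = false /\ Nat.div2 (S (S (2*j))) = S j.
Proof.
  induction j. simpl. auto.
  replace (2 * S j)%nat with (S (S (2 * j))) by lia. destruct IHj as [H1 [H2 [H3 H4]]].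
  repeat split; simpl; try rewrite H4; auto.
Qed.

Lemma enum_surj (n : Z) : exists k, enum k = n.
Proof.
  destruct (Z_le_gt_dec 0 n).
  - exists (2 * Z.to_nat n)%nat. unfold enum. destruct (even_facts (Z.to_nat n)) as [H1 [H2 _]].
    rewrite H1, H2. lia.
  - set (p := Z.to_nat (- n)). assert (Hp : (1 <= p)%nat) by (unfold p; lia).
    exists (S (2 * (p - 1)))%nat. unfold enum. destruct (even_facts (p - 1)) as [_ [_ [H3 H4]]].
    rewrite H3, H4. replace (S (p - 1)) with p by lia. unfold p. lia.
Qed.

Section Conc.
Variables phi tau : R.

Definition sigm (k : nat) : R := 2 * phi + 2 * IZR (enum k) * tau.
Definition ss (k : nat) : R := sigm k - fl (sigm k).
Lemma ss_bd k : 0 <= ss k < 1. Proof. unfold ss. pose proof (fl_bound (sigm k)). lra. Qed.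

Definition gg (u : R) : R := u + A ss u.
Definition GG (v : R) : R := gg (2 * v) / 6.

Definition Sp (v : R) : Prop := exists n m : Z, 2 * v - 2 * phi - 2 * IZR n * tau = IZR m.

Lemma GG_strict x y : x < y -> GG x < GG y.
Proof. intros H. unfold GG, gg. assert (A ss (2*x) <= A ss (2*y)) by (apply A_mono; [apply ss_bd|lra]). lra. Qed.

Lemma GG_half x : GG (x + /2) = GG x + /2.
Proof. unfold GG, gg. replace (2 * (x + /2)) with (2 * x + 1) by field. rewrite A_shift by apply ss_bd. field. Qed.

Lemma GG_cont v : ~ Sp v -> forall d, 0 < d -> exists u' u, u' < v < u /\ GG u - GG u' < d.
Proof.
  intros Hn d Hd.
  destruct (A_cont ss ss_bd (2 * v)) with (d := d) as [h [Hh1 [Hh2 Hh3]]]; auto.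
  { intros k m Hkm. apply Hn. exists (enum k), (m - Zfloor (sigm k))%Z. rewrite minus_IZR.
    unfold ss, sigm, fl in *. lra. }
  set (h' := Rmin h d). assert (0 < h') by (apply Rmin_glb_lt; lra).
  pose proof (Rmin_l h d). pose proof (Rmin_r h d). fold h' in H0, H1.
  exists (v - h'/2), (v + h'/2). split. lra.
  unfold GG, gg. replace (2 * (v + h'/2)) with (2*v + h') by field. replace (2 * (v - h'/2)) with (2*v - h') by field.
  assert (A ss (2*v + h') <= A ss (2*v + h)) by (apply A_mono; [apply ss_bd|lra]).
  assert (A ss (2*v - h) <= A ss (2*v - h')) by (apply A_mono; [apply ss_bd|lra]).
  lra.
Qed.

Lemma GG_jump v : Sp v -> exists c, 0 < c /\ forall u' u, u' < v <= u -> c <= GG u - GG u'.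
Proof.
  intros [n [m Hnm]]. destruct (enum_surj n) as [k Hk].
  exists (w k / 6). split. pose proof (w_pos k). lra.
  intros u' u Hu. assert (w k <= A ss (2*u) - A ss (2*u')).
  { apply (A_jump ss ss_bd (2*u') (2*v) (2*u) k (m + Zfloor (sigm k))). lra.
    unfold ss, sigm, fl. rewrite plus_IZR, Hk. lra. }
  unfold GG, gg. lra.
Qed.

Lemma Sp_tau v : Sp (v + tau) <-> Sp v.
Proof.
  split; intros [n [m H]].
  - exists (n - 1)%Z, m. rewrite minus_IZR. simpl. nra.
  - exists (n + 1)%Z, m. rewrite plus_IZR. simpl. nra.
Qed.

Lemma Sp_orb (n : nat) (k : Z) : Sp (phi + INR n * tau + IZR k).
Proof. exists (Z.of_nat n), (2 * k)%Z. rewrite mult_IZR, <- INR_IZR_INZ. simpl. lra. Qed.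

End Conc.

Theorem proposition3p3 (tau phi : R) (Htau : irrational tau) :
  let phi' := phi + / 2 in
  exists F : R -> R,
    denjoy_map F /\
    (* (a) Z_2-equivariance *)
    (forall x, eqT (F (x + / 2)) (F x + / 2)) /\
    (* (b) rotation number is tau mod 1 *)
    (exists r, rot_num F r /\ eqT r tau) /\
    (* (c) *)
    (forall C : R -> Prop, minimal_set F C ->
       cantor_set C /\
       (forall x, C (x + / 2) <-> C x) /\
       exists P : R -> R,
         cantor_function C P /\
         (forall x, eqT (P (x + / 2)) (P x + / 2)) /\
         (forall y, (exists a, accessible C a /\ eqT (P a) y) <->
            exists n : Z, eqT (phi + IZR n * tau) y \/
                          eqT (phi' + IZR n * tau) y) /\
         (forall x, eqT (P (F x)) (P x + tau))).
Proof.
  intros phi'.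
  set (G := GG phi tau).
  assert (Gs : forall x y, x < y -> G x < G y) by apply GG_strict.
  assert (Gh : forall x, G (x + /2) = G x + /2) by apply GG_half.
  assert (Gc := GG_cont phi tau). fold G in Gc.
  assert (Gj := GG_jump phi tau). fold G in Gj.
  assert (St := Sp_tau phi tau).
  assert (So := Sp_orb phi tau).
  exists (F G tau).
  split; [|split; [|split]].
  - split. split. apply (F_cont G Gs Gh (Sp phi tau) Gc Gj tau St).
    split. apply (F_strict G Gs Gh (Sp phi tau) Gc Gj tau St). apply (F_one G Gs Gh).
    split. exists tau. split. intros x. apply (F_rot G Gs Gh). auto.
    apply (not_conj G Gs Gh (Sp phi tau) Gc Gj tau phi Htau So).
  - intros x. rewrite (F_half G Gs Gh). exists 0%Z. simpl. ring.
  - exists tau. split. intros x. apply (F_rot G Gs Gh). exists 0%Z. simpl. ring.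
  - intros C HC. rewrite (minimal_is_E G Gs Gh (Sp phi tau) Gc Gj tau St Htau C HC).
    split. apply (E_cantor G Gs Gh (Sp phi tau) Gc Gj tau phi Htau So).
    split. apply (E_half G Gs Gh).
    exists (P G). split. apply (E_cantor_fun G Gs Gh (Sp phi tau) Gc Gj tau phi Htau So).
    split. intros x. rewrite (P_half G Gs Gh). exists 0%Z. simpl. ring.
    split.
    + intros y. split.
      * intros [a [[b [Hg|Hg]] Hy]].
        -- destruct (gap_E_flat G Gs Gh (Sp phi tau) Gc Gj tau phi Htau So a b Hg) as [_ [n [m Hnm]]].
           destruct Hy as [k Hk]. exists n.
           destruct (Z_modulo_2 m) as [[j Hj]|[j Hj]]; subst m.
           ++ left. exists (k + j)%Z. rewrite plus_IZR, mult_IZR in *. simpl in *. lra.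
           ++ right. exists (k + j)%Z. unfold phi'. rewrite plus_IZR, mult_IZR in *. simpl in *. lra.
        -- destruct (gap_E_flat G Gs Gh (Sp phi tau) Gc Gj tau phi Htau So b a Hg) as [Hba [n [m Hnm]]].
           rewrite Hba in Hnm.
           destruct Hy as [k Hk]. exists n.
           destruct (Z_modulo_2 m) as [[j Hj]|[j Hj]]; subst m.
           ++ left. exists (k + j)%Z. rewrite plus_IZR, mult_IZR in *. simpl in *. lra.
           ++ right. exists (k + j)%Z. unfold phi'. rewrite plus_IZR, mult_IZR in *. simpl in *. lra.
      * intros [n [Hn|Hn]].
        -- set (v := phi + IZR n * tau).
           assert (Hv : Sp phi tau v) by (exists n, 0%Z; unfold v; simpl; ring).
           exists (aa G v). split. exists (bb G v). left. apply (gap_E_ab G Gs Gh (Sp phi tau) Gc Gj); auto.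
           rewrite (P_aa G Gs Gh). auto.
        -- set (v := phi' + IZR n * tau).
           assert (Hv : Sp phi tau v) by (exists n, 1%Z; unfold v, phi'; simpl; field).
           exists (aa G v). split. exists (bb G v). left. apply (gap_E_ab G Gs Gh (Sp phi tau) Gc Gj); auto.
           rewrite (P_aa G Gs Gh). auto.
    + intros x. rewrite (PF G Gs Gh). exists 0%Z. simpl. ring.
Qed.
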